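(* Let $P \in S$ with $P \notin K$. Then the centralizer $C_S(P)$ is commutative.
   Context: Standing conventions: $K$ is a field, $R = K[y]$, $\sigma$ is a $K$-algebra endomorphism of $R$ with $\deg_y(\sigma(y)) > 1$, and $\delta$ is a $K$-linear $\sigma$-derivation of $R$ ($\delta(ab) = \sigma(a)\delta(b) + \delta(a)b$). $S = R[x;\sigma,\delta]$ is the Ore extension (polynomials $\sum r_i x^i$, $r_i\in R$, with $xr = \sigma(r)x + \delta(r)$). $C_S(P)$ is the set of elements of $S$ commuting with $P$. *)

(* Defs.v *)
From HB Require Import structures.
From mathcomp Require Import all_boot all_order all_algebra.
Set Implicit Arguments. Unset Strict Implicit. Unset Printing Implicit Defensive.
Import GRing.Theory.
Local Open Scope ring_scope.

(* Ore extension S = R[x; sigma, delta] with R = {poly K} = K[y].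
   Elements of S are represented (additively) by {poly {poly K}}:
   P = \sum_i r_i x^i  is the polynomial with coefficients r_i in R.
   Multiplication is the Ore product determined by x r = sigma(r) x + delta(r). *)

Section Ore.
Variable K : fieldType.
Variables (sigma delta : {poly K} -> {poly K}).

(* left multiplication by x:  x * (\sum r_i x^i) = \sum (sigma r_i x^{i+1} + delta r_i x^i) *)
Definition ore_mulx (q : {poly {poly K}}) : {poly {poly K}} :=
  map_poly sigma q * 'X + map_poly delta q.

Definition ore_mulXn (n : nat) (q : {poly {poly K}}) : {poly {poly K}} :=
  iter n ore_mulx q.

Definition ore_mul (p q : {poly {poly K}}) : {poly {poly K}} :=
  \sum_(i < size p) (p`_i)%:P * ore_mulXn i q.

Definition ore_centralizer (P : {poly {poly K}}) : pred {poly {poly K}} :=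
  fun Q => ore_mul P Q == ore_mul Q P.

End Ore.

(* Main.v *)
Require Import Defs.
From HB Require Import structures.
From mathcomp Require Import all_boot all_order all_algebra.
From mathcomp Require Import zify.
From Stdlib Require Import Lia Classical.
Set Implicit Arguments. Unset Strict Implicit. Unset Printing Implicit Defensive.
Import GRing.Theory.
Lemma nt_inv N x : 0 < N -> exists u, u * x = gcdn N x %[mod N].
Proof.
move=> hN; have [a _ ha] := Bezoutl x hN.
exists ((N - 1) * a).
have e1 : (N - 1) * (gcdn N x + a * x) = 0 %[mod N].
  by rewrite -modnMmr (eqP ha) muln0.
have e2 : (N - 1) * gcdn N x + gcdn N x = 0 %[mod N].
  by rewrite -{2}[gcdn N x]mul1n -mulnDl subnK // modnMr mod0n.
apply/eqP; rewrite -(eqn_modDr ((N - 1) * gcdn N x)) addnC -mulnA -mulnDr.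
by rewrite e1 addnC e2.
Qed.

Lemma nt_solve m k n : 0 < n -> gcdn m n %| k -> exists i, i * m = k %[mod n].
Proof.
move=> hn /dvdnP [t ->]; have [u hu] := @nt_inv n m hn.
exists (t * u); rewrite -mulnA -modnMmr hu modnMmr gcdnC.
by [].
Qed.

Lemma nt_comb m k n : 0 < n -> exists a b, a * m + b * k = gcdn (gcdn m n) k %[mod n].
Proof.
move=> hn; have [u hu] := @nt_inv n m hn; rewrite gcdnC in hu.
set g0 := gcdn m n in hu *.
have g0p : 0 < g0 by rewrite gcdn_gt0 hn orbT.
have [hd|hnd] := boolP (g0 %| k).
  by exists u, 0; rewrite mul0n addn0 hu (gcdn_idPl hd).
set h := gcdn g0 k.
have hlt : h < g0.
  rewrite ltn_neqAle dvdn_leq ?dvdn_gcdl // andbT.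
  by apply/eqP => e; move: hnd; rewrite -e dvdn_gcdr.
have [b hb] := @nt_inv g0 k g0p.
have hb' : b * k = (b * k) %/ g0 * g0 + h.
  by rewrite {1}(divn_eq (b * k) g0) hb modn_small.
set t := (b * k) %/ g0 in hb'.
exists (t * (n - 1) * u), b.
rewrite hb' -mulnA.
rewrite -modnDml -modnMmr hu modnMmr modnDml.
have -> : t * (n - 1) * g0 + (t * g0 + h) = t * g0 * n + h.
  have : n = (n - 1).+1 by rewrite subn1 prednK.
  move=> ->; rewrite subSS subn0 mulnS; lia.
by rewrite modnMDl.
Qed.

Local Open Scope ring_scope.

Section OreBasics.
Variable K : fieldType.
Variable sigma : {lrmorphism {poly K} -> {poly K}}.
Variable delta : {linear {poly K} -> {poly K}}.
Hypothesis Hder : forall a b : {poly K}, delta (a * b) = sigma a * delta b + delta a * b.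

Local Notation mx := (ore_mulx sigma delta).
Local Notation mXn := (ore_mulXn sigma delta).
Local Notation omul := (ore_mul sigma delta).
Implicit Types p q r : {poly {poly K}}.

Lemma delta1 : delta 1 = 0.
Proof.
have := Hder 1 1; rewrite !mulr1 rmorph1 mul1r.
by move/esym/(congr1 (fun z => z - delta 1)); rewrite subrr addrK.
Qed.

Lemma deltaC (c : K) : delta c%:P = 0.
Proof. by rewrite -alg_polyC linearZ /= delta1 scaler0. Qed.

Lemma sigmaC (c : K) : sigma c%:P = c%:P.
Proof. by rewrite -alg_polyC linearZ /= rmorph1. Qed.

Lemma mxD p q : mx (p + q) = mx p + mx q.
Proof. by rewrite /ore_mulx !raddfD /= mulrDl addrACA. Qed.

Lemma mxN p : mx (- p) = - mx p.
Proof. by rewrite /ore_mulx !raddfN /= mulNr opprD. Qed.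

Lemma mx0 : mx 0 = 0.
Proof. by rewrite /ore_mulx !raddf0 mul0r addr0. Qed.

Lemma mxC a q : mx (a%:P * q) = (sigma a)%:P * mx q + (delta a)%:P * q.
Proof.
rewrite /ore_mulx mulrDr -addrA; congr (_ + _).
  by rewrite rmorphM /= map_polyC mulrA.
apply/polyP => i; rewrite !coefD !coefCM !coef_map /= coefCM Hder.
by rewrite addrC.
Qed.

Lemma mxX q : mx (q * 'X) = mx q * 'X.
Proof.
rewrite /ore_mulx mulrDl; congr (_ + _).
  by rewrite rmorphM /= map_polyX.
by apply/polyP => i; rewrite coef_map /= !coefMX; case: (i == 0); rewrite ?coef_map ?linear0.
Qed.

Lemma mXnD n p q : mXn n (p + q) = mXn n p + mXn n q.
Proof. by elim: n => //= n IH; rewrite IH mxD. Qed.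
Lemma mXnN n p : mXn n (- p) = - mXn n p.
Proof. by elim: n => //= n IH; rewrite IH mxN. Qed.
Lemma mXn0 n : mXn n 0 = 0.
Proof. by elim: n => //= n IH; rewrite IH mx0. Qed.
Lemma mXnS n p : mXn n.+1 p = mXn n (mx p).
Proof. by rewrite /ore_mulXn iterSr. Qed.
Lemma mXnS' n p : mXn n.+1 p = mx (mXn n p).
Proof. by []. Qed.

Lemma omulE N p q : (size p <= N)%N ->
  omul p q = \sum_(i < N) (p`_i)%:P * mXn i q.
Proof.
move=> hN; rewrite /ore_mul (big_ord_widen N (fun i => (p`_i)%:P * mXn i q)) //.
rewrite big_mkcond /=; apply: eq_bigr => i _.
by case: ltnP => // hi; rewrite nth_default // mul0r.
Qed.

Lemma omulDl p p' q : omul (p + p') q = omul p q + omul p' q.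
Proof.
pose N := maxn (size (p + p')) (maxn (size p) (size p')).
have h1 : (size (p + p')%R <= N)%N by rewrite leq_maxl.
have h2 : (size p <= N)%N by rewrite (leq_trans _ (leq_maxr _ _)) // leq_maxl.
have h3 : (size p' <= N)%N by rewrite (leq_trans _ (leq_maxr _ _)) // leq_maxr.
rewrite (omulE _ h1) (omulE _ h2) (omulE _ h3).
by rewrite -big_split /=; apply: eq_bigr => i _; rewrite coefD polyCD mulrDl.
Qed.

Lemma omul0l q : omul 0 q = 0.
Proof. by rewrite /ore_mul size_poly0 big_ord0. Qed.

Lemma omulNl p q : omul (- p) q = - omul p q.
Proof. by apply/eqP; rewrite -addr_eq0 -omulDl addNr omul0l. Qed.

Lemma omulC a q : omul a%:P q = a%:P * q.
Proof. by rewrite (@omulE 1) ?size_polyC ?leq_b1 // big_ord1 coefC. Qed.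

Lemma omulCl a p q : omul (a%:P * p) q = a%:P * omul p q.
Proof.
have hs : (size (a%:P * p)%R <= size p)%N by rewrite mul_polyC size_scale_leq.
rewrite (omulE q hs) /ore_mul mulr_sumr; apply: eq_bigr => i _.
by rewrite coefCM polyCM mulrA.
Qed.

Lemma omulDr p q q' : omul p (q + q') = omul p q + omul p q'.
Proof. by rewrite /ore_mul -big_split /=; apply: eq_bigr => i _; rewrite mXnD mulrDr. Qed.

Lemma omul0r p : omul p 0 = 0.
Proof. by rewrite /ore_mul big1 // => i _; rewrite mXn0 mulr0. Qed.

Lemma omulX p q : omul (p * 'X) q = omul p (mx q).
Proof.
rewrite (@omulE (size p).+1) ?(leq_trans (size_polyMleq _ _)) ?size_polyX ?addn2 //.
rewrite big_ord_recl coefMX eqxx mul0r add0r /ore_mul.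
by apply: eq_bigr => i _; rewrite coefMX /= add0n -mXnS' mXnS.
Qed.

Lemma size_map_le (f : {poly K} -> {poly K}) p : (size (map_poly f p) <= size p)%N.
Proof. exact: size_poly. Qed.

Lemma omulmx p q : omul (mx p) q = mx (omul p q).
Proof.
rewrite {1}/ore_mulx omulDl omulX.
rewrite (@omulE (size p) (map_poly sigma p)) ?size_map_le //.
rewrite (@omulE (size p) (map_poly delta p)) ?size_map_le //.
rewrite /ore_mul -big_split /=.
elim/big_rec2: _ => [|i y1 y2 _ ->]; first by rewrite mx0.
by rewrite mxD mxC !coef_map /= -mXnS.
Qed.

Lemma omulA p q r : omul p (omul q r) = omul (omul p q) r.
Proof.
elim/poly_ind: p q => [|p c IH] q; first by rewrite !omul0l.
rewrite (omulDl (p * 'X) c%:P) (omulDl (p * 'X) c%:P) !omulX !omulC omulDl.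
by rewrite -omulmx IH omulCl.

Qed.

Lemma omul1l q : omul 1 q = q.
Proof. by rewrite -polyC1 omulC mul1r. Qed.

Lemma mXn1 i : mXn i 1 = 'X^i.
Proof.
elim: i => [|i IH] //=; rewrite IH /ore_mulx.
rewrite map_polyXn /= -exprSr.
have -> : map_poly delta 'X^i = 0.
  by apply/polyP => j; rewrite coef_map /= coefXn coef0; case: (_ == _); rewrite ?delta1 ?raddf0.
by rewrite addr0.
Qed.

Lemma omul1r p : omul p 1 = p.
Proof.
rewrite /ore_mul; apply: etrans (coefK p); rewrite poly_def.
by apply: eq_bigr => i _; rewrite mXn1 mul_polyC.
Qed.



Hypothesis Hdeg : (2 < size (sigma 'X))%N.
Local Notation d := (size (sigma 'X)).-1.

Lemma sigma_comp f : sigma f = f \Po sigma 'X.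
Proof.
rewrite comp_polyE.
rewrite {1}(_ : f = \sum_(i < size f) f`_i *: 'X^i); last by rewrite -poly_def coefK.
rewrite linear_sum; apply: eq_bigr => i _.
by rewrite linearZ /= rmorphXn.
Qed.

Lemma sigma_neq0 f : f != 0 -> sigma f != 0.
Proof.
move=> hf; rewrite sigma_comp -lead_coef_eq0 lead_coef_comp; last by apply: ltn_trans Hdeg.
rewrite mulf_eq0 negb_or lead_coef_eq0 hf /= expf_neq0 // lead_coef_eq0.
by apply/eqP => h; move: Hdeg; rewrite h size_poly0.
Qed.

Lemma size_sigma f : f != 0 -> size (sigma f) = ((size f).-1 * d).+1.
Proof.
move=> hf; rewrite -(size_comp_poly f (sigma 'X)) -sigma_comp prednK //.
by rewrite size_poly_gt0 sigma_neq0.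
Qed.

Definition sig n f := iter n sigma f.

Lemma sig_neq0 n f : f != 0 -> sig n f != 0.
Proof. by move=> hf; elim: n => //= n IH; apply: sigma_neq0. Qed.

Lemma size_sig n f : f != 0 -> size (sig n f) = ((size f).-1 * d ^ n).+1.
Proof.
move=> hf; elim: n => [|n IH]; first by rewrite expn0 muln1 prednK // size_poly_gt0.
by rewrite /sig iterS size_sigma ?sig_neq0 // -/(sig n f) IH /= expnSr mulnA.
Qed.

Lemma sigD n f g : sig n (f + g) = sig n f + sig n g.
Proof. by elim: n => //= n IH; rewrite /sig /= -!/(sig n _) IH rmorphD. Qed.
Lemma sigN n f : sig n (- f) = - sig n f.
Proof. by elim: n => //= n IH; rewrite /sig /= -!/(sig n _) IH rmorphN. Qed.
Lemma sigZ n c f : sig n (c *: f) = c *: sig n f.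
Proof. by elim: n => //= n IH; rewrite /sig /= -!/(sig n _) IH linearZ. Qed.
Lemma sigM n f g : sig n (f * g) = sig n f * sig n g.
Proof. by elim: n => //= n IH; rewrite /sig /= -!/(sig n _) IH rmorphM. Qed.

Lemma size_mx q : q != 0 -> size (mx q) = (size q).+1.
Proof.
move=> hq; have hl : sigma (lead_coef q) != 0 by rewrite sigma_neq0 ?lead_coef_eq0.
have hs : size (map_poly sigma q) = size q by rewrite size_map_poly_id0.
have hs0 : map_poly sigma q != 0 by rewrite -size_poly_eq0 hs size_poly_eq0.
by rewrite /ore_mulx size_polyDl size_mulX // hs // ltnS size_map_le.
Qed.

Lemma lead_mx q : q != 0 -> lead_coef (mx q) = sigma (lead_coef q).
Proof.
move=> hq; have hl : sigma (lead_coef q) != 0 by rewrite sigma_neq0 ?lead_coef_eq0.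
have hs : size (map_poly sigma q) = size q by rewrite size_map_poly_id0.
have hs0 : map_poly sigma q != 0 by rewrite -size_poly_eq0 hs size_poly_eq0.
rewrite /ore_mulx lead_coefDl ?lead_coefMX ?lead_coef_map_eq //.
by rewrite size_mulX // hs // ltnS size_map_le.
Qed.

Lemma mx_neq0 q : q != 0 -> mx q != 0.
Proof. by move=> hq; rewrite -size_poly_eq0 size_mx. Qed.

Lemma mXn_neq0 n q : q != 0 -> mXn n q != 0.
Proof. by move=> hq; elim: n => //= n IH; apply: mx_neq0. Qed.

Lemma size_mXn n q : q != 0 -> size (mXn n q) = (size q + n)%N.
Proof.
move=> hq; elim: n => [|n IH]; first by rewrite addn0.
by rewrite mXnS' size_mx ?mXn_neq0 // IH addnS.
Qed.

Lemma size_mXn_le n q : (size (mXn n q) <= size q + n)%N.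
Proof.
have [->|hq] := eqVneq q 0; first by rewrite mXn0 size_poly0.
by rewrite size_mXn.
Qed.

Lemma lead_mXn n q : q != 0 -> lead_coef (mXn n q) = sig n (lead_coef q).
Proof.
move=> hq; elim: n => [|n IH] //.
by rewrite mXnS' lead_mx ?mXn_neq0 // IH.
Qed.

Lemma size_CM (c : {poly K}) q : (size (c%:P * q)%R <= size q)%N.
Proof. by rewrite mul_polyC size_scale_leq. Qed.

Lemma size_sum_le N (c : nat -> {poly K}) q :
  (size (\sum_(i < N) (c i)%:P * mXn i q)%R <= size q + N.-1)%N.
Proof.
elim: N => [|N IH]; first by rewrite big_ord0 size_poly0.
rewrite big_ord_recr /=; apply: leq_trans (size_polyD _ _) _.
rewrite geq_max (leq_trans (size_CM _ _)) ?size_mXn_le // andbT.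
by apply: leq_trans IH _; rewrite leq_add2l; case: N.
Qed.

Lemma size_sum_lt N (c : nat -> {poly K}) q : q != 0 ->
  (size (\sum_(i < N) (c i)%:P * mXn i q)%R < size q + N)%N.
Proof.
move=> hq; case: N => [|N]; first by rewrite big_ord0 size_poly0 addn0 size_poly_gt0.
by apply: leq_ltn_trans (size_sum_le _ _ _) _; rewrite addnS ltnS.
Qed.

Lemma size_omul p q : p != 0 -> q != 0 ->
  size (omul p q) = ((size p).-1 + size q)%N.
Proof.
move=> hp hq; rewrite /ore_mul; have := size_poly_gt0 p; rewrite hp.
case hs: (size p) => [|k] // _; rewrite big_ord_recr /=.
have hlk : p`_k = lead_coef p by rewrite lead_coefE hs.
have hlc : p`_k != 0 by rewrite hlk lead_coef_eq0.
rewrite addrC size_polyDl size_Cmul // size_mXn // addnC //.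
by rewrite addnC (size_sum_lt k (fun i => p`_i)).
Qed.

Lemma lead_omul p q : p != 0 -> q != 0 ->
  lead_coef (omul p q) = lead_coef p * sig (size p).-1 (lead_coef q).
Proof.
move=> hp hq; rewrite /ore_mul; have := size_poly_gt0 p; rewrite hp.
case hs: (size p) => [|k] // _; rewrite big_ord_recr /=.
have hlk : p`_k = lead_coef p by rewrite lead_coefE hs.
have hlc : p`_k != 0 by rewrite hlk lead_coef_eq0.
rewrite addrC lead_coefDl; last first.
  by rewrite size_Cmul // size_mXn // (size_sum_lt k (fun i => p`_i)).
by rewrite mul_polyC lead_coefZ lead_mXn // hlk.
Qed.

Lemma omul_neq0 p q : p != 0 -> q != 0 -> omul p q != 0.
Proof. by move=> hp hq; rewrite -size_poly_eq0 size_omul // addn_eq0 size_poly_eq0 (negbTE hq) andbF. Qed.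

Definition OS (_ : forall a b : {poly K}, delta (a * b) = sigma a * delta b + delta a * b)
  : Type := {poly {poly K}}.
Definition OSt := OS Hder.
HB.instance Definition _ := GRing.Zmodule.on OSt.
Lemma oner_neq0' : (1 : {poly {poly K}}) != 0. Proof. exact: oner_neq0. Qed.
HB.instance Definition _ := GRing.Zmodule_isNzRing.Build OSt
  omulA omul1l omul1r omulDl omulDr oner_neq0'.
End OreBasics.


Section Main.
Variable K : fieldType.
Variable sigma : {lrmorphism {poly K} -> {poly K}}.
Variable delta : {linear {poly K} -> {poly K}}.
Hypothesis Hder : forall a b : {poly K}, delta (a * b) = sigma a * delta b + delta a * b.
Hypothesis Hdeg : (2 < size (sigma 'X))%N.
Local Notation T := (OSt Hder).
Local Notation PP := {poly {poly K}}.
Local Notation omul := (ore_mul sigma delta).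
Local Notation d := (size (sigma 'X)).-1.
Local Notation sig := (sig sigma).

Definition sz (x : T) := size (x : PP).
Definition lc (x : T) : {poly K} := lead_coef (x : PP).
Definition s (c : K) : T := ((c%:P)%:P : PP).

Lemma mulTE (x y : T) : x * y = omul x y. Proof. by []. Qed.

Lemma sz_eq0 (x : T) : (sz x == 0%N) = (x == 0).
Proof. exact: size_poly_eq0. Qed.

Lemma lc_eq0 (x : T) : (lc x == 0) = (x == 0).
Proof. exact: lead_coef_eq0. Qed.

Lemma szM (x y : T) : x != 0 -> y != 0 -> sz (x * y) = ((sz x).-1 + sz y)%N.
Proof. exact: size_omul. Qed.

Lemma lcM (x y : T) : x != 0 -> y != 0 -> lc (x * y) = lc x * sig (sz x).-1 (lc y).
Proof. exact: lead_omul. Qed.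

Lemma mulT_neq0 (x y : T) : x != 0 -> y != 0 -> x * y != 0.
Proof. exact: omul_neq0. Qed.

Lemma mulT_eq0 (x y : T) : x * y = 0 -> x = 0 \/ y = 0.
Proof.
move=> h; have [->|hx] := eqVneq x 0; first by left.
have [->|hy] := eqVneq y 0; first by right.
by move: (mulT_neq0 hx hy); rewrite h eqxx.
Qed.

Lemma expT_neq0 (x : T) k : x != 0 -> x ^+ k != 0.
Proof.
move=> hx; elim: k => [|k IH]; first by rewrite expr0 oner_neq0.
by rewrite exprS mulT_neq0.
Qed.

Lemma szX (x : T) k : x != 0 -> sz (x ^+ k) = (k * (sz x).-1).+1.
Proof.
move=> hx; elim: k => [|k IH]; first by rewrite expr0 /sz size_poly1.
by rewrite exprS szM ?expT_neq0 // IH mulSn addnS.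
Qed.

Lemma s0 : s 0 = 0. Proof. by rewrite /s !polyC0. Qed.
Lemma s1 : s 1 = 1. Proof. by rewrite /s !polyC1. Qed.
Lemma sD a b : s (a + b) = s a + s b. Proof. by rewrite /s !polyCD. Qed.
Lemma sN a : s (- a) = - s a. Proof. by rewrite /s !polyCN. Qed.

Lemma sMl c (x : T) : s c * x = ((c%:P *: (x : PP)) : PP).
Proof. by rewrite mulTE /s omulC mul_polyC. Qed.

Lemma mXn_s n c (q : PP) :
  ore_mulXn sigma delta n ((c%:P)%:P * q) = (c%:P)%:P * ore_mulXn sigma delta n q.
Proof.
elim: n => [|n IH]; first by rewrite /ore_mulXn.
rewrite mXnS' IH (mxC Hder).
by rewrite sigmaC (deltaC Hder) polyC0 mul0r addr0.
Qed.

Lemma sMr c (x : T) : x * s c = s c * x.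
Proof.
rewrite !mulTE /s omulC.
transitivity ((c%:P)%:P * omul x 1); last by rewrite omul1r.
rewrite /ore_mul mulr_sumr; apply: eq_bigr => i _.
by rewrite -[X in ore_mulXn _ _ _ X]mulr1 mXn_s mulrCA.
Qed.

Lemma sM a b : s (a * b) = s a * s b.
Proof. by rewrite sMl /s -mul_polyC !polyCM. Qed.

Lemma sz_s c (x : T) : c != 0 -> sz (s c * x) = sz x.
Proof. by move=> hc; rewrite sMl /sz size_scale // polyC_eq0. Qed.

Lemma coef_s c (x : T) i : ((s c * x : T) : PP)`_i = c%:P * (x : PP)`_i.
Proof. by rewrite sMl coefZ. Qed.


Lemma drop_lead (R : nzRingType) (p q : {poly R}) : p != 0 -> (size q <= size p)%N ->
  q`_(size p).-1 = p`_(size p).-1 -> (size (p - q)%R < size p)%N.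
Proof.
move=> hp hq hc; have hs : (size (p - q)%R <= size p)%N.
  by apply: leq_trans (size_polyD _ _) _; rewrite size_polyN geq_max leqnn hq.
rewrite ltn_neqAle hs andbT; apply/eqP => he.
have : lead_coef (p - q) == 0 by rewrite lead_coefE he coefB hc subrr.
rewrite lead_coef_eq0 subr_eq0 => /eqP hpq.
by move: he; rewrite hpq subrr size_poly0 => /eqP; rewrite eq_sym size_poly_eq0 -hpq (negbTE hp).
Qed.

Lemma d_ge2 : (2 <= d)%N.
Proof. by rewrite -ltnS prednK // (ltn_trans _ Hdeg). Qed.

Lemma nat_uniq a b1 b2 D M : (2 <= D)%N -> (a + b1 * D = b1 + a * M)%N ->
  (a + b2 * D = b2 + a * M)%N -> b1 = b2.
Proof. move=> hD h1 h2; nia. Qed.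

Variable P : T.
Hypothesis HP : forall c : K, (P : PP) != (c%:P)%:P.
Definition cent (x : T) := P * x == x * P.
Local Notation n := (sz P).-1.

Lemma P_neq0 : P != 0.
Proof. by have := HP 0; rewrite !polyC0. Qed.

Lemma lc_neq0' (x : T) : x != 0 -> lc x != 0.
Proof. by rewrite lc_eq0. Qed.

Lemma lcP_neq0 : lc P != 0.
Proof. by rewrite lc_eq0 P_neq0. Qed.

Lemma lc_eq (x : T) : cent x -> x != 0 ->
  lc P * sig n (lc x) = lc x * sig (sz x).-1 (lc P).
Proof. by move=> /eqP hx hx0; rewrite -lcM ?P_neq0 // hx lcM ?P_neq0. Qed.

Lemma deg_eq m (u : {poly K}) : u != 0 ->
  lc P * sig n u = u * sig m (lc P) ->
  ((size (lc P)).-1 + (size u).-1 * d ^ n = (size u).-1 + (size (lc P)).-1 * d ^ m)%N.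
Proof.
move=> hu he; have := congr1 (fun z : {poly K} => size z) he => /=.
rewrite !size_mul ?sig_neq0 ?lcP_neq0 // !size_sig ?lcP_neq0 //.
have h1 := size_poly_gt0 u; rewrite hu in h1.
have h2 := size_poly_gt0 (lc P); rewrite lcP_neq0 in h2.
case: (size u) h1 => // k _; case: (size (lc P)) h2 => // l _.
by rewrite !addnS => -[].
Qed.

Lemma dn_ge2 k : (0 < k)%N -> (2 <= d ^ k)%N.
Proof.
case: k => // k _; rewrite expnS; apply: leq_trans d_ge2 _.
by rewrite leq_pmulr // expn_gt0 (leq_trans _ d_ge2).
Qed.

Lemma lc_unique (hn : (0 < n)%N) m (u v : {poly K}) : u != 0 -> v != 0 ->
  lc P * sig n u = u * sig m (lc P) -> lc P * sig n v = v * sig m (lc P) ->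
  exists2 c : K, c != 0 & u = c *: v.
Proof.
move=> hu hv Eu Ev.
have hb := nat_uniq (dn_ge2 hn) (deg_eq hu Eu) (deg_eq hv Ev).
have hs : size u = size v.
  have h1 := size_poly_gt0 u; have h2 := size_poly_gt0 v; rewrite hu in h1; rewrite hv in h2.
  by rewrite -(prednK h1) -(prednK h2) hb.
have hlv : lead_coef v != 0 by rewrite lead_coef_eq0.
have hlu : lead_coef u != 0 by rewrite lead_coef_eq0.
pose c := lead_coef u / lead_coef v.
have hc : c != 0 by rewrite mulf_neq0 ?invr_eq0.
exists c => //.
pose r := u - c *: v.
have Er : lc P * sig n r = r * sig m (lc P).
  by rewrite /r sigD sigN sigZ mulrDr mulrN -scalerAr Eu Ev mulrDl mulNr scalerAl.
have hr : (size r < size u)%N.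
  apply: drop_lead => //; first by rewrite hs size_scale_leq.
  by rewrite coefZ hs -lead_coefE /c -mulrA mulVf // mulr1 lead_coefE hs.
have [r0|rn0] := eqVneq r 0; first by apply/eqP; rewrite -subr_eq0 -/r r0.
have hb2 := nat_uniq (dn_ge2 hn) (deg_eq rn0 Er) (deg_eq hu Eu).
have h1 := size_poly_gt0 r; rewrite rn0 in h1.
by move: hr; rewrite -(prednK h1) hb2 prednK ?ltnn // size_poly_gt0.
Qed.

Lemma star (hn : (0 < n)%N) (x y : T) : cent x -> cent y -> x != 0 -> y != 0 ->
  sz x = sz y -> exists c : K, (sz (x - s c * y)%R < sz x)%N.
Proof.
move=> cx cy hx hy hs.
have Ex := lc_eq cx hx; have Ey := lc_eq cy hy; rewrite -hs in Ey.
have [c hc huv] := lc_unique hn (lc_neq0' hx) (lc_neq0' hy) Ex Ey.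
exists c; apply: drop_lead => //.
  by have := sz_s y hc; rewrite /sz => ->; rewrite -/(sz x) hs.
transitivity (c%:P * (y : PP)`_(size (x : PP)).-1); first exact: coef_s.
have -> : (y : PP)`_(size (x : PP)).-1 = lc y by rewrite /lc lead_coefE -/(sz y) -hs.
have -> : (x : PP)`_(size (x : PP)).-1 = lc x by rewrite /lc lead_coefE.
by rewrite huv mul_polyC.
Qed.

Lemma centP : cent P. Proof. by rewrite /cent. Qed.
Lemma cent0 : cent 0. Proof. by rewrite /cent mulr0 mul0r. Qed.
Lemma cent1 : cent 1. Proof. by rewrite /cent mulr1 mul1r. Qed.
Lemma cent_s c : cent (s c). Proof. by rewrite /cent sMr. Qed.
Lemma centD x y : cent x -> cent y -> cent (x + y).
Proof. by move=> /eqP hx /eqP hy; rewrite /cent mulrDr mulrDl hx hy. Qed.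
Lemma centN x : cent x -> cent (- x).
Proof. by move=> /eqP hx; rewrite /cent mulrN mulNr hx. Qed.
Lemma centB x y : cent x -> cent y -> cent (x - y).
Proof. by move=> hx hy; apply: centD => //; apply: centN. Qed.
Lemma centM x y : cent x -> cent y -> cent (x * y).
Proof. by move=> /eqP hx /eqP hy; rewrite /cent mulrA hx -mulrA hy mulrA. Qed.
Lemma centX x k : cent x -> cent (x ^+ k).
Proof. by move=> hx; elim: k => [|k IH]; rewrite ?expr0 ?cent1 // exprS centM. Qed.

Lemma sz_gt0 (x : T) : x != 0 -> (0 < sz x)%N.
Proof. by move=> hx; rewrite lt0n sz_eq0. Qed.

Lemma case_n0 (hn : n = 0%N) (x y : T) : cent x -> cent y -> x * y = y * x.
Proof.
have hP1 : (size (lc P) >= 2)%N.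
  rewrite leqNgt; apply/negP => h.
  have hP := HP ((lc P)`_0); move: hP; rewrite -(size1_polyC h).
  have h1 : (size (P : PP) <= 1)%N by rewrite -/(sz P) -(prednK (sz_gt0 P_neq0)) hn.
  have eP : (P : PP) = (lc P)%:P.
    by rewrite /lc lead_coefE -/(sz P) hn; exact: size1_polyC h1.
  by rewrite {1}eP; rewrite eqxx.
have small (z : T) : cent z -> (size (z : PP) <= 1)%N.
  move=> cz; have [->|hz] := eqVneq z 0; first by rewrite size_poly0.
  have := deg_eq (lc_neq0' hz) (lc_eq cz hz); rewrite hn expn0 muln1.
  rewrite -/(sz z) -(prednK (sz_gt0 hz)) ltnS leqn0.
  case: (sz z).-1 => // k h; exfalso.
  have hd := dn_ge2 (ltn0Sn k); move: h; set D := (d ^ k.+1)%N; move: hP1 hd.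
  set a := size (lc P); move=> ha hD h; nia.
move=> cx cy; rewrite !mulTE.
by rewrite (size1_polyC (small x cx)) (size1_polyC (small y cy)) !omulC mulrC.
Qed.

Definition dg (x : T) := (sz x).-1.

Lemma dgM (x y : T) : x != 0 -> y != 0 -> dg (x * y) = (dg x + dg y)%N.
Proof.
move=> hx hy; rewrite /dg szM // -/(dg x).
by rewrite -(prednK (sz_gt0 hy)) addnS.
Qed.

Lemma dgX (x : T) k : x != 0 -> dg (x ^+ k) = (k * dg x)%N.
Proof. by move=> hx; rewrite /dg szX. Qed.

Lemma gen (hn : (0 < n)%N) : exists Q, [/\ cent Q, Q != 0 &
  forall x, cent x -> x != 0 -> (gcdn (dg Q) n %| dg x)%N].
Proof.
suff H : forall g Q, cent Q -> Q != 0 -> (gcdn (dg Q) n <= g)%N -> exists Q, [/\ cent Q, Q != 0 &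
  forall x, cent x -> x != 0 -> (gcdn (dg Q) n %| dg x)%N].
  by apply: (H n P centP P_neq0); rewrite dvdn_leq // dvdn_gcdr.
elim => [|g IH] Q cQ hQ hg.
  by move: hg; rewrite leqNgt gcdn_gt0 hn orbT.
case: (classic (exists x, [/\ cent x, x != 0 & ~~ (gcdn (dg Q) n %| dg x)%N])).
  move=> [x [cx hx hnd]].
  have [a [b hab]] := nt_comb (dg Q) (dg x) hn.
  set g0 := gcdn (dg Q) n in hnd hab hg.
  set h := gcdn g0 (dg x) in hab.
  pose Q' := Q ^+ a * x ^+ b.
  have hQ' : Q' != 0 by rewrite mulT_neq0 ?expT_neq0.
  have cQ' : cent Q' by rewrite centM ?centX.
  apply: (IH Q' cQ' hQ').
  have hdQ' : dg Q' = (a * dg Q + b * dg x)%N by rewrite dgM ?expT_neq0 // !dgX.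
  have hhn : (h %| n)%N by rewrite (dvdn_trans (dvdn_gcdl _ _)) // dvdn_gcdr.
  have -> : gcdn (dg Q') n = h.
    by rewrite -gcdn_modl hdQ' hab gcdn_modl; apply/gcdn_idPl.
  have hlt : (h < g0)%N.
    rewrite ltn_neqAle dvdn_leq ?dvdn_gcdl ?gcdn_gt0 ?hn ?orbT // andbT.
    by apply/eqP => e; move: hnd; rewrite -e dvdn_gcdr.
  by rewrite -ltnS (leq_trans hlt hg).
move=> H; exists Q; split => // x cx hx.
by apply/negPn/negP => hnd; apply: H; exists x.
Qed.

Inductive inW (Q : T) : T -> Prop :=
 | WP : inW Q P
 | WQ : inW Q Q
 | Ws c : inW Q (s c)
 | WD x y : inW Q x -> inW Q y -> inW Q (x + y)
 | WM x y : inW Q x -> inW Q y -> inW Q (x * y).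

Lemma W_cent Q x : cent Q -> inW Q x -> cent x.
Proof.
move=> cQ; elim => //; [exact: centP | exact: cent_s | | ].
- by move=> ? ? _ ? _ ?; apply: centD.
- by move=> ? ? _ ? _ ?; apply: centM.
Qed.

Lemma W_comm Q x y : cent Q -> inW Q x -> inW Q y -> x * y = y * x.
Proof.
move=> cQ hx.
have gen1 : [/\ x * P = P * x, x * Q = Q * x & forall c, x * s c = s c * x].
  elim: hx => {x}.
  - by split => //; [exact: (eqP cQ) | move=> c; rewrite sMr].
  - by split => //; [exact: (esym (eqP cQ)) | move=> c; rewrite sMr].
  - move=> c; split; rewrite ?sMr // => c'; by rewrite -sM mulrC sM.
  - move=> a b _ [h1 h2 h3] _ [h1' h2' h3']; split.
    + by rewrite mulrDl mulrDr h1 h1'.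
    + by rewrite mulrDl mulrDr h2 h2'.
    + by move=> c; rewrite mulrDl mulrDr h3 h3'.
  - move=> a b _ [h1 h2 h3] _ [h1' h2' h3']; split.
    + by rewrite -mulrA h1' !mulrA h1.
    + by rewrite -mulrA h2' !mulrA h2.
    + by move=> c; rewrite -mulrA h3' !mulrA h3.
case: gen1 => h1 h2 h3.
elim => {y}.
- by [].
- by [].
- by move=> c; rewrite h3.
- by move=> y z _ e1 _ e2; rewrite mulrDl mulrDr e1 e2.
- by move=> y z _ e1 _ e2; rewrite mulrA e1 -!mulrA e2.
Qed.

Lemma inW0 Q : inW Q 0. Proof. by rewrite -s0; apply: Ws. Qed.
Lemma inW1 Q : inW Q 1. Proof. by rewrite -s1; apply: Ws. Qed.
Lemma inWX Q x k : inW Q x -> inW Q (x ^+ k).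
Proof.
move=> hx; elim: k => [|k IH]; first by rewrite expr0; apply: inW1.
by rewrite exprS; apply: WM.
Qed.

Lemma sz_dg (x : T) : x != 0 -> sz x = (dg x).+1.
Proof. by move=> hx; rewrite /dg prednK // sz_gt0. Qed.

Lemma reduce (hn : (0 < n)%N) Q (cQ : cent Q) (hQ : Q != 0)
  (gQ : forall x, cent x -> x != 0 -> (gcdn (dg Q) n %| dg x)%N) :
  forall y, cent y -> exists w, inW Q w /\ (sz (y - w)%R <= n * dg Q)%N.
Proof.
set B := (n * dg Q)%N.
suff H : forall N y, (sz y <= N)%N -> cent y -> exists w, inW Q w /\ (sz (y - w)%R <= B)%N.
  by move=> y; apply: H.
elim => [|N IH] y hyN cy.
  by exists 0; split; [apply: inW0 | rewrite subr0 (leq_trans hyN)].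
have [hyB|hyB] := leqP (sz y) B.
  by exists 0; split; [apply: inW0 | rewrite subr0].
have hy : y != 0 by rewrite -sz_eq0 -lt0n (leq_ltn_trans _ hyB).
set k := dg y.
have hBk : (B <= k)%N by rewrite -ltnS -sz_dg.
have [i0 hi0] := @nt_solve (dg Q) k n hn (gQ y cy hy).
set i := (i0 %% n)%N.
have him : (i * dg Q = k %[mod n])%N by rewrite /i modnMml.
have hi : (i < n)%N by rewrite ltn_pmod.
have hle : (i * dg Q <= k)%N.
  by apply: leq_trans hBk; rewrite /B leq_mul // ltnW.
have hdv : (n %| k - i * dg Q)%N by rewrite -eqn_mod_dvd // eq_sym him.
set j := ((k - i * dg Q) %/ n)%N.
have hk : k = (i * dg Q + j * n)%N by rewrite /j divnK // subnKC.
pose M := Q ^+ i * P ^+ j.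
have hM : M != 0 by rewrite mulT_neq0 ?expT_neq0 // P_neq0.
have cM : cent M by apply: centM; apply: centX => //; apply: centP.
have hszM : sz y = sz M.
  by rewrite !sz_dg // /M dgM ?expT_neq0 ?P_neq0 // !dgX ?P_neq0 // -/k hk.
have [c hc] := star hn cy cM hy hM hszM.
set y' := y - s c * M.
have cy' : cent y' by apply: centB => //; apply: centM => //; apply: cent_s.
have [w' [hw' hw'B]] := IH y' (leq_trans hc hyN) cy'.
exists (s c * M + w'); split.
  by apply: WD => //; apply: WM; [apply: Ws | apply: WM; apply: inWX; [apply: WQ | apply: WP]].
by rewrite opprD addrA.
Qed.

Lemma s_sum I (r : seq I) (Pr : pred I) (f : I -> K) :
  s (\sum_(i <- r | Pr i) f i) = \sum_(i <- r | Pr i) s (f i).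
Proof. exact: (big_morph s sD s0). Qed.

Lemma dep (hn : (0 < n)%N) B (F : 'I_B.+1 -> T) :
  (forall i, cent (F i)) -> (forall i, (sz (F i) <= B)%N) ->
  exists c : 'I_B.+1 -> K, (exists i, c i != 0) /\ \sum_i s (c i) * F i = 0.
Proof.
elim: B F => [|B IH] F cF hF.
  exists (fun _ => 1); split; first by exists ord0; rewrite oner_eq0.
  apply: big1 => i _.
  have -> : F i = 0 by apply/eqP; rewrite -sz_eq0 -leqn0.
  by rewrite mulr0.
have hj : exists j : 'I_B.+2, forall l, exists c : K, (sz (F l - s c * F j)%R <= B)%N.
  case: (pickP (fun j => sz (F j) == B.+1)) => [j /eqP hj | hnone].
    exists j => l; have := hF l; rewrite leq_eqVlt => /orP [/eqP hl | hl].
      have hl0 : F l != 0 by rewrite -sz_eq0 hl.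
      have hj0 : F j != 0 by rewrite -sz_eq0 hj.
      have [c hc] := star hn (cF l) (cF j) hl0 hj0 (etrans hl (esym hj)).
      by exists c; rewrite -ltnS -hl.
    by exists 0; rewrite s0 mul0r subr0 -ltnS.
  exists ord0 => l; exists 0; rewrite s0 mul0r subr0.
  have := hF l; rewrite leq_eqVlt => /orP [/eqP hl | hl]; last by rewrite -ltnS.
  by move: (hnone l); rewrite /= hl eqxx.
move: hj => [j hj]; have [e he] := fin_all_exists hj.
pose F' i := F (lift j i) - s (e (lift j i)) * F j.
have cF' : forall i, cent (F' i).
  by move=> i; apply: centB; [apply: cF | apply: centM; [apply: cent_s | apply: cF]].
have [c' [[i0 hi0] hsum]] := IH F' cF' (fun i => he (lift j i)).
pose c'' l := if unlift j l is Some i then c' i else - \sum_i c' i * e (lift j i).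
exists c''; split.
  exists (lift j i0); rewrite /c''.
  by have -> : unlift j (lift j i0) = Some i0 by exact: liftK.
rewrite (bigD1_ord j) //= /c'' unlift_none.
under eq_bigr => i _ do (have -> : unlift j (lift j i) = Some i by exact: liftK).
transitivity (\sum_i s (c' i) * F' i); last exact: hsum.
rewrite /F'; under [in RHS]eq_bigr => i _ do rewrite mulrBr mulrA -sM.
by rewrite sumrB sN s_sum mulNr mulr_suml addrC.
Qed.

Lemma szD (x y : T) : (sz (x + y)%R <= maxn (sz x) (sz y))%N.
Proof. exact: size_polyD. Qed.

Lemma szDl (x y : T) : (sz y < sz x)%N -> sz (x + y)%R = sz x.
Proof. exact: size_polyDl. Qed.

Lemma sz_sM_le c (x : T) : (sz (s c * x)%R <= sz x)%N.
Proof. by rewrite /sz sMl size_scale_leq. Qed.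

Lemma szPX i : sz (P ^+ i) = (i * n).+1.
Proof. by rewrite szX // P_neq0. Qed.

Lemma szfP_le N (c : nat -> K) :
  (sz (\sum_(i < N) s (c i) * P ^+ i)%R <= N.-1 * n + 1)%N.
Proof.
elim: N => [|N IH]; first by rewrite big_ord0 /sz size_poly0.
rewrite big_ord_recr /=; apply: leq_trans (szD _ _) _.
rewrite geq_max; apply/andP; split.
  by apply: leq_trans IH _; rewrite leq_add2r leq_mul2r; case: N => [|N] /=; rewrite ?leqnn ?leqnSn orbT.
by apply: leq_trans (sz_sM_le _ _) _; rewrite szPX addn1.
Qed.

Lemma fP_neq0 (hn : (0 < n)%N) N (c : nat -> K) : (exists2 i, (i < N)%N & c i != 0) ->
  \sum_(i < N) s (c i) * P ^+ i != 0.
Proof.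
elim: N => [|N IH] [i hi hci] //.
rewrite big_ord_recr /=.
have [hcN|hcN] := eqVneq (c N) 0.
  rewrite hcN s0 mul0r addr0; apply: IH; exists i => //.
  by move: hi; rewrite ltnS leq_eqVlt => /orP [/eqP e|//]; move: hci; rewrite e hcN eqxx.
rewrite -sz_eq0 addrC szDl; first by rewrite sz_s // szPX.
rewrite sz_s // szPX; case: N {IH hi hcN} => [|N]; first by rewrite big_ord0 /sz size_poly0.
apply: leq_ltn_trans (szfP_le _ _) _; rewrite /= addn1 ltnS.
by rewrite ltn_mul2r hn ltnSn.
Qed.

Lemma inW_sum Q (I : finType) (F : I -> T) : (forall i, inW Q (F i)) -> inW Q (\sum_i F i).
Proof.
move=> h; elim/big_ind: _ => //; first exact: inW0.
by move=> x y; apply: WD.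
Qed.

Lemma cent_commX (y : T) i : cent y -> P ^+ i * y = y * P ^+ i.
Proof.
move=> /eqP cy; elim: i => [|i IH]; first by rewrite expr0 mul1r mulr1.
by rewrite exprS -mulrA IH mulrA cy -mulrA.
Qed.

Lemma key (hn : (0 < n)%N) Q (cQ : cent Q) (hQ : Q != 0)
  (gQ : forall x, cent x -> x != 0 -> (gcdn (dg Q) n %| dg x)%N) (X : T) :
  cent X -> exists f, [/\ inW Q f, f != 0, (forall y, cent y -> f * y = y * f) & inW Q (f * X)].
Proof.
move=> cX; set B := (n * dg Q)%N.
have hr : forall i : 'I_B.+1, exists w, inW Q w /\ (sz (P ^+ i * X - w)%R <= B)%N.
  move=> i; apply: reduce => //; apply: centM => //; apply: centX; apply: centP.
have [w hw] := fin_all_exists hr.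
pose F (i : 'I_B.+1) := P ^+ i * X - w i.
have cF : forall i, cent (F i).
  move=> i; apply: centB; first by apply: centM => //; apply: centX; apply: centP.
  by apply: (W_cent cQ); case: (hw i).
have [c [[i0 hi0] hsum]] := dep hn cF (fun i => proj2 (hw i)).
exists (\sum_i s (c i) * P ^+ i); split.
- by apply: inW_sum => i; apply: WM; [apply: Ws | apply: inWX; apply: WP].
- pose c' k := c (inord k).
  have -> : \sum_i s (c i) * P ^+ i = \sum_(i < B.+1) s (c' i) * P ^+ i.
    by apply: eq_bigr => i _; rewrite /c' inord_val.
  by apply: fP_neq0 => //; exists i0 => //; rewrite /c' inord_val.
- move=> y cy; rewrite mulr_suml mulr_sumr; apply: eq_bigr => i _.
  by rewrite -mulrA cent_commX // mulrA -sMr mulrA.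
have -> : (\sum_i s (c i) * P ^+ i) * X = \sum_i s (c i) * w i.
  rewrite mulr_suml; transitivity (\sum_i s (c i) * (F i + w i)).
    by apply: eq_bigr => i _; rewrite /F subrK mulrA.
  by under eq_bigr => i _ do rewrite mulrDr; rewrite big_split /= hsum add0r.
by apply: inW_sum => i; apply: WM; [apply: Ws | case: (hw i)].
Qed.

Lemma comm_pos (hn : (0 < n)%N) (R1 R2 : T) : cent R1 -> cent R2 -> R1 * R2 = R2 * R1.
Proof.
move=> c1 c2; have [Q [cQ hQ gQ]] := gen hn.
have [f1 [W1 nz1 cm1 Wf1]] := key hn cQ hQ gQ c1.
have [f2 [W2 nz2 cm2 Wf2]] := key hn cQ hQ gQ c2.
have cf2 : cent f2 by apply: (W_cent cQ).
have e : (f1 * f2) * (R1 * R2 - R2 * R1) = 0.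
  rewrite mulrBr; apply/eqP; rewrite subr_eq0; apply/eqP.
  have -> : f1 * f2 * (R1 * R2) = (f1 * R1) * (f2 * R2).
    by rewrite -!mulrA; congr (_ * _); rewrite !mulrA cm2.
  have -> : f1 * f2 * (R2 * R1) = (f2 * R2) * (f1 * R1).
    rewrite cm1 // -!mulrA; congr (_ * _); rewrite !mulrA; congr (_ * _).
    by rewrite -cm1 // cm1.
  exact: (W_comm cQ).
case: (mulT_eq0 e) => [h|h].
  by move: (mulT_neq0 nz1 nz2); rewrite h eqxx.
by apply/eqP; rewrite -subr_eq0 h.
Qed.

Lemma comm_all (R1 R2 : T) : cent R1 -> cent R2 -> R1 * R2 = R2 * R1.
Proof.
case: (posnP n) => [hn|hn]; first exact: case_n0.
exact: comm_pos.
Qed.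
End Main.

Unset Implicit Arguments.
Theorem theorem4p1 (K : fieldType)
    (sigma : {lrmorphism {poly K} -> {poly K}})
    (delta : {linear {poly K} -> {poly K}})
    (Hdeg : (2 < size (sigma 'X))%N)
    (Hder : forall a b : {poly K}, delta (a * b) = sigma a * delta b + delta a * b)
    (P : {poly {poly K}})
    (HP : forall c : K, P != (c%:P)%:P) :
  {in ore_centralizer sigma delta P &,
    forall Q1 Q2, ore_mul sigma delta Q1 Q2 = ore_mul sigma delta Q2 Q1}.
Proof.
move=> Q1 Q2 h1 h2.
exact: (@comm_all K sigma delta Hder Hdeg (P : OSt Hder) HP Q1 Q2 h1 h2).
Qed.
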